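(* Let $(S,\mathcal{A},\mu)$ be a complete, $\sigma$-finite measure space. If $X$ is a generalised lush (GL) real Banach space, then $L^1(\mu,X)$ is also GL.
   Context: For a real Banach space $X$, $y^*\in S_{X^*}$ and $\varepsilon>0$, $S(y^*,\varepsilon)=\{z\in B_X:y^*(z)>1-\varepsilon\}$, and $d(x,A)=\inf_{a\in A}\|x-a\|$. $X$ is generalised lush (GL) if for every $x\in S_X$ and every $\varepsilon>0$ there is $y^*\in S_{X^*}$ with $x\in S(y^*,\varepsilon)$ and $d(z,S(y^*,\varepsilon))+d(z,-S(y^*,\varepsilon))<2+\varepsilon$ for every $z\in S_X$. $L^1(\mu,X)$ is the Lebesgue–Bochner space. *)

(* Defs.v *)
From mathcomp Require Import all_boot all_algebra.
From mathcomp Require Import all_classical all_reals all_analysis.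
Import GRing.Theory Num.Theory.
Set Implicit Arguments.
Unset Strict Implicit.
Unset Printing Implicit Defensive.
Local Open Scope classical_set_scope.
Local Open Scope ring_scope.

(* Generalised lushness for a (semi)normed real vector space given as a
   subspace [P] of an lmodType [E] equipped with a seminorm [N].  For a normed
   space X one takes P = setT and N = normr; for L^1(mu,X) one takes P = the
   Bochner-integrable functions and N = the L^1 seminorm (quotienting by null
   functions does not change any of the quantities below). *)
Section GL.
Variables (R : realType) (E : lmodType R) (P : set E) (N : E -> R).

Definition linear_functional (f : E -> R) : Prop :=
  (forall x y, P x -> P y -> f (x + y) = f x + f y) /\
  (forall (a : R) x, P x -> f (a *: x) = a * f x).

Definition dual_sphere (f : E -> R) : Prop :=
  linear_functional f /\
  (forall x, P x -> `|f x| <= N x) /\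
  (forall e : R, 0 < e -> exists x, P x /\ N x <= 1 /\ 1 - e < `|f x|).

Definition slice (f : E -> R) (e : R) : set E :=
  [set z | P z /\ N z <= 1 /\ 1 - e < f z].

Definition dist (z : E) (A : set E) : R := inf [set N (z - a) | a in A].

Definition GL_space : Prop :=
  forall x, P x -> N x = 1 -> forall e : R, 0 < e ->
    exists f, dual_sphere f /\ slice f e x /\
      forall z, P z -> N z = 1 ->
        dist z (slice f e) + dist z [set - a | a in slice f e] < 2 + e.
End GL.

Definition GL (R : realType) (X : normedModType R) : Prop :=
  @GL_space R X setT (@Num.norm R X).

Section Bochner.
Variables (R : realType) (d : measure_display) (T : measurableType d)
  (mu : {measure set T -> \bar R}) (X : normedModType R).

Definition simple_function (g : T -> X) : Prop :=
  finite_set (range g) /\ forall y, measurable (g @^-1` [set y]).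

Definition strongly_measurable (f : T -> X) : Prop :=
  exists g : nat -> T -> X, (forall n, simple_function (g n)) /\
    {ae mu, forall x, g n x @[n --> \oo] --> f x}.

Definition L1_set : set (T -> X) :=
  [set f | strongly_measurable f /\ (\int[mu]_x (`|f x|%:E) < +oo)%E].

Definition L1_norm (f : T -> X) : R := fine (\int[mu]_x (`|f x|%:E)).
End Bochner.

(* Main.v *)
Require Import Defs.
From mathcomp Require Import all_boot all_order all_algebra.
From mathcomp Require Import all_classical all_reals all_analysis.
From mathcomp Require Import measurable_realfun.
From mathcomp Require Import ring lra.
Import GRing.Theory Num.Theory.
Import Order.TTheory.
Import numFieldNormedType.Exports.
Local Open Scope classical_set_scope.
Local Open Scope ring_scope.

Section Helpers.
Context (R : realType) (d : measure_display) (T : measurableType d)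
  (mu : {measure set T -> \bar R}).

Definition simp {Y : Type} (g : T -> Y) :=
  finite_set (range g) /\ forall y, measurable (g @^-1` [set y]).

Lemma simp_pre Y (g : T -> Y) B : simp g -> measurable (g @^-1` B).
Proof.
move=> [fg mg].
have -> : g @^-1` B = \bigcup_(y in range g `&` B) g @^-1` [set y].
  apply/seteqP; split => [s Bs|s [y [[s' _ <-] By] /= ->]] //=.
  by exists (g s) => //; split => //; exists s.
apply: fin_bigcup_measurable => //.
exact: sub_finite_set (@subIsetl _ _ _) fg.
Qed.

Lemma simp_comb Y Z W (g1 : T -> Y) (g2 : T -> Z) (F : Y -> Z -> W) :
  simp g1 -> simp g2 -> simp (fun s => F (g1 s) (g2 s)).
Proof.
move=> [f1 m1] [f2 m2]; split.
  apply: sub_finite_set (finite_image2 F f1 f2).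
  by move=> _ [s _ <-]; exists (g1 s); [by exists s|exists (g2 s) => //; exists s].
move=> w.
have -> : (fun s => F (g1 s) (g2 s)) @^-1` [set w] =
  \bigcup_(u in range g1) (g1 @^-1` [set u] `&` g2 @^-1` [set z | F u z = w]).
  apply/seteqP; split => [s /= <-|s [u _ /= [-> <-]]] //.
  by exists (g1 s) => //; exists s.
apply: fin_bigcup_measurable => // u _.
by apply: measurableI; [exact: m1|exact: (@simp_pre _ g2)].
Qed.

Lemma simp_cst Y (y : Y) : simp (fun _ : T => y).
Proof.
split; first by apply: sub_finite_set (finite_set1 y) => _ [s _ <-].
move=> z; have [->|yz] := pselect (y = z).
  by rewrite preimage_cst/=; case: ifPn => // _; exact: measurableT.
by rewrite (_ : _ @^-1` _ = set0) //; apply/seteqP; split => // s /=.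
Qed.

Lemma simp_comp Y Z (g : T -> Y) (F : Y -> Z) : simp g -> simp (fun s => F (g s)).
Proof.
move=> sg; exact: (@simp_comb _ _ _ g g (fun a _ => F a)).
Qed.

Lemma simp_meas (h : T -> R) : simp h -> measurable_fun setT h.
Proof. by move=> sh _ B _; rewrite setTI; exact: simp_pre. Qed.

Hypothesis cmu : measure_is_complete mu.

Lemma ae_lim_meas (h : (T -> R)^nat) (k : T -> R) :
  (forall n, measurable_fun setT (h n)) ->
  {ae mu, forall s, h ^~ s @ \oo --> k s} -> measurable_fun setT k.
Proof.
move=> mh [N [mN N0 sN]].
have mk : measurable_fun (~` N) k.
  apply: (measurable_realfun.measurable_fun_cvg (h := h)).
    by move=> n; apply: measurable_funS (mh n).
  by move=> s Ns; apply: contrapT => /= hs; apply: Ns; apply: sN.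
move=> _ B mB; rewrite setTI.
have -> : k @^-1` B = (~` N `&` k @^-1` B) `|` (N `&` k @^-1` B).
  by rewrite -setIUl setUCl setTI.
apply: measurableU; first exact: (mk (measurableC mN) B mB).
by apply: cmu; exists N; split => //; exact: subIsetl.
Qed.


Lemma lip_cvg {X : normedModType R} (F : X -> R) (K : R) (u : nat -> X) y :
  0 <= K -> (forall w w', `|F w - F w'| <= K * `|w - w'|) ->
  u n @[n --> \oo] --> y -> F (u n) @[n --> \oo] --> F y.
Proof.
move=> K0 FL /cvgrPdist_lt uy; apply/cvgrPdist_lt => e e0.
have eK : 0 < e / (K + 1) by rewrite divr_gt0 // ltr_wpDl.
apply: filterS (uy _ eK) => n hn.
apply: (le_lt_trans (FL _ _)).
have [->|Kn0] := eqVneq K 0; first by rewrite mul0r.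
have Kp : 0 < K by rewrite lt_def Kn0 K0.
rewrite -(ltr_pM2l Kp) in hn; apply: (lt_le_trans hn).
rewrite mulrA ler_pdivrMr ?ltr_wpDl // mulrC ler_pM2l //.
by rewrite lerDl.
Qed.

Lemma sm_meas (X : normedModType R) Y (y : T -> X) (t : T -> Y)
  (F : Y -> X -> R) (K : R) : 0 <= K ->
  @strongly_measurable R d T mu X y -> simp t ->
  (forall u w w', `|F u w - F u w'| <= K * `|w - w'|) ->
  measurable_fun setT (fun s => F (t s) (y s)).
Proof.
move=> K0 [g [sg cg]] st FL.
apply: (@ae_lim_meas (fun n s => F (t s) (g n s))).
  by move=> n; apply: simp_meas; apply: simp_comb => //; exact: (sg n).
move: cg; apply: filterS; move=> s /= hs; exact: (@lip_cvg X (F (t s)) K (fun n => g n s) (y s) K0 (FL (t s)) hs).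
Qed.

Definition Int (h : T -> R) := mu.-integrable setT (EFin \o h).

Lemma Int_le (h k : T -> R) : measurable_fun setT h ->
  (forall s, `|h s| <= k s) -> Int k -> Int h.
Proof.
move=> mh hk ik; apply: le_integrable ik.
  by [].
  exact/measurable_EFinP.
move=> s _ /=; rewrite lee_fin (le_trans (hk s)) //; exact: ler_norm.
Qed.

Lemma IntD h1 h2 : Int h1 -> Int h2 -> Int (fun s => h1 s + h2 s).
Proof.
move=> i1 i2; apply: eq_integrable (integrableD measurableT i1 i2) => //.
Qed.

Lemma IntB h1 h2 : Int h1 -> Int h2 -> Int (fun s => h1 s - h2 s).
Proof.
move=> i1 i2; apply: eq_integrable (integrableB measurableT i1 i2) => //.
Qed.

Lemma IntZ (c : R) h : Int h -> Int (fun s => c * h s).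
Proof.
move=> i; apply: eq_integrable (integrableZl measurableT c i) => //.
Qed.

Lemma Int_meas h : Int h -> measurable_fun setT h.
Proof. by move=> /integrableP[/measurable_EFinP]. Qed.

Section normed.
Variable X : normedModType R.

Lemma L1_meas (y : T -> X) : L1_set mu y -> measurable_fun setT (fun s => `|y s|).
Proof.
move=> [sy _].
apply: (@sm_meas X unit y (fun _ => tt) (fun _ w => `|w|) 1) => //.
  exact: simp_cst.
by move=> _ w w'; rewrite mul1r ler_dist_dist.
Qed.

Lemma L1_Int (y : T -> X) : L1_set mu y -> Int (fun s => `|y s|).
Proof.
move=> Ly; apply/integrableP; split; first exact/measurable_EFinP/L1_meas.
case: Ly => _; apply: le_lt_trans; rewrite le_eqVlt; apply/orP; left.
by apply/eqP; apply: eq_integral => s _ /=; rewrite ?abse_EFin normr_id.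
Qed.

Lemma simp_L1 (g : T -> X) : simp g -> Int (fun s => `|g s|) -> L1_set mu g.
Proof.
move=> sg /integrableP[_ ig]; split.
  exists (fun _ => g); split => //; apply: aeW => s; exact: cvg_cst.
apply: le_lt_trans ig; rewrite le_eqVlt; apply/orP; left.
by apply/eqP; apply: eq_integral => s _ /=; rewrite ?abse_EFin normr_id.
Qed.

End normed.


Lemma simp_ind (C : set T) : measurable C -> simp (fun s => `[< C s >]).
Proof.
move=> mC; split.
  apply: (sub_finite_set (B := [set true] `|` [set false])).
    by move=> b _; case: b; [left|right].
  by rewrite finite_setU; split; exact: finite_set1.
case.
  rewrite (_ : _ @^-1` _ = C) //; apply/seteqP; split => s /=.
    by move/asboolP.
  by move=> Cs; apply/asboolP.
rewrite (_ : _ @^-1` _ = ~` C); first exact: measurableC.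
apply/seteqP; split => s /=.
  by move=> /negbT /asboolPn.
by move=> nCs; apply/negbTE/asboolPn.
Qed.

Lemma density (X : normedModType R) (y : T -> X) (del : R) :
  L1_set mu y -> 0 < del -> exists t : T -> X, simp t /\
  Int (fun s => `|y s - t s|) /\ Rintegral mu setT (fun s => `|y s - t s|) < del.
Proof.
move=> Ly del0; have iy := @L1_Int X y Ly.
case: (Ly) => [[g [sg cg]] fin].
pose C n := [set s | `|g n s| <= 2 * `|y s|].
have mC n : measurable (C n).
  have mf : measurable_fun setT (fun s => 2 * `|y s| - `|g n s|).
    apply: (@sm_meas X X y (g n) (fun u w => 2 * `|w| - `|u|) 2) => //.
    - by case: Ly.
    - exact: (sg n).
    - move=> u w w'; have -> : 2 * `|w| - `|u| - (2 * `|w'| - `|u|) = 2 * (`|w| - `|w'|) by ring.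
      rewrite normrM.
      by rewrite ger0_norm // ler_pM2l // ler_dist_dist.
  rewrite (_ : C n = setT `&` (fun s => 2 * `|y s| - `|g n s|) @^-1` `[0, +oo[).
    exact: mf.
  apply/seteqP; split => s /=.
    by move=> Cs; split => //; rewrite in_itv /= andbT subr_ge0.
  by move=> [_]; rewrite in_itv /= andbT subr_ge0.
pose hn n s := if `[< C n s >] then g n s else 0.
have shn n : simp (hn n).
  have := @simp_comb X bool X (g n) (fun s => `[< C n s >]) (fun (u : X) (b : bool) => if b then u else 0) (sg n) (@simp_ind (C n) (mC n)).
  by [].
have hny n s : `|hn n s| <= 2 * `|y s|.
  rewrite /hn; case: ifPn => [/asboolP //|_]; by rewrite normr0 mulr_ge0.
have cvh : {ae mu, forall s, hn n s @[n --> \oo] --> y s}.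
  move: cg; apply: filterS => s /= hs.
  have [ys0|ys0] := eqVneq (y s) 0.
    rewrite ys0; apply: cvg_near_cst; apply: nearW => n.
    by apply/eqP; rewrite -normr_le0 -(mulr0 2) -(normr0 X) -ys0 hny.
  have nys : 0 < `|y s| by rewrite normr_gt0.
  apply/cvgrPdist_lt => e e0.
  move: hs => /cvgrPdist_lt hs.
  apply: filterS2 (hs _ e0) (hs _ nys) => n h1 h2.
  rewrite /hn ifT //; apply/asboolP; rewrite /C /=.
  have h3 : `|g n s| <= `|y s| + `|y s - g n s|.
    by have := ler_normB (y s) (y s - g n s); rewrite opprB addrCA subrr addr0.
  lra.
have lipn (u w w' : X) : `| `|w - u| - `|w' - u| | <= 1 * `|w - w'|.
  by rewrite mul1r; apply: le_trans (ler_dist_dist _ _) _; rewrite opprB addrA subrK.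
have mrn n : measurable_fun setT (fun s => `|y s - hn n s|).
  have := @sm_meas X X y (hn n) (fun u w => `|w - u|) 1 ler01 ltac:(by case: Ly) (shn n) lipn.
  by [].
pose fn n s := (`|y s - hn n s|)%:E.
have mfn n : measurable_fun setT (fn n) by exact/measurable_EFinP.
have fcv : {ae mu, forall s, setT s -> fn ^~ s @ \oo --> (cst 0%E : T -> \bar R) s}.
  move: cvh; apply: filterS => s /= hs _.
  apply/fine_cvgP; split; first exact: nearW.
  have := @lip_cvg X (fun w => `|y s - w|) 1 (fun n => hn n s) (y s) ler01 _ hs.
  rewrite subrr normr0; apply.
  move=> w w'; rewrite mul1r; apply: le_trans (ler_dist_dist _ _) _.
  by rewrite opprB addrC addrA subrK distrC.
have ig : mu.-integrable setT (fun s => (3 * `|y s|)%:E) := @IntZ 3 _ iy.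
have fg : {ae mu, forall s n, setT s -> (`|fn n s| <= (3 * `|y s|)%:E)%E}.
  apply: aeW => s n _; rewrite /fn /= lee_fin normr_id.
  apply: le_trans (ler_normB _ _) _; have := hny n s; lra.
have [_ cvi _] := dominated_convergence measurableT mfn (measurable_cst _) fcv ig fg.
have : \forall n \near \oo, (\int[mu]_(x in setT) `|fn n x - cst 0%E x| < del%:E)%E.
  move/fine_cvgP: cvi => [fin' /cvgrPdist_lt cv].
  apply: filterS2 fin' (cv _ del0) => n /= fn1 hn1.
  rewrite -(fineK fn1) lte_fin; rewrite sub0r normrN in hn1.
  exact: le_lt_trans (ler_norm _) hn1.
move=> /filter_ex [n Hn]; exists (hn n); split => //.
have iyn : Int (fun s => `|y s - hn n s|).
  apply: (@Int_le _ (fun s => 3 * `|y s|) (mrn n)); last exact: (@IntZ 3 _ iy).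
  move=> s; rewrite normr_id.
  apply: le_trans (ler_normB _ _) _; have := hny n s; lra.
split => //.
move: Hn; rewrite /Rintegral.
move=> Hn.
have E : (\int[mu]_x `|fn n x - cst 0%R x|)%E = (\int[mu]_x (`|y x - hn n x|)%:E)%E.
  by apply: eq_integral => s _; rewrite /fn /cst /= subr0 normr_id.
rewrite E in Hn.
rewrite -lte_fin fineK //.
by have := integrable_fin_num measurableT iyn.
Qed.


Lemma dist_le (E : lmodType R) (N : E -> R) (A : set E) z a :
  (forall b, 0 <= N b) -> A a -> dist N z A <= N (z - a).
Proof.
move=> N0 Aa; rewrite /dist; apply: ge_inf; last by exists a.
by exists 0 => _ [b _ <-]; exact: N0.
Qed.

Lemma dist_pick (E : lmodType R) (N : E -> R) (A : set E) z (e : R) :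
  (forall b, 0 <= N b) -> A !=set0 -> 0 < e ->
  exists2 a, A a & N (z - a) < dist N z A + e.
Proof.
move=> N0 [a0 Aa0] e0.
have hi : has_inf [set N (z - a) | a in A].
  split; first by exists (N (z - a0)), a0.
  by exists 0 => _ [b _ <-]; exact: N0.
have [_ [a Aa <-] H] := inf_adherent e0 hi.
by exists a.
Qed.

Lemma L1_norm_ge0 (X : normedModType R) (g : T -> X) : 0 <= L1_norm mu g.
Proof. by rewrite /L1_norm fine_ge0 // integral_ge0 // => s _; rewrite lee_fin. Qed.

Lemma IntA h : Int h -> Int (fun s => `|h s|).
Proof.
move=> /integrableP[mh ih]; apply/integrableP; split.
  by apply/measurable_EFinP; apply: measurableT_comp => //; exact/measurable_EFinP.
apply: le_lt_trans ih; rewrite le_eqVlt; apply/orP; left.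
by apply/eqP; apply: eq_integral => s _ /=; rewrite normr_id.
Qed.

Lemma simp_Int_norm (X : normedModType R) (g : T -> X) (k : T -> R) : simp g ->
  (forall s, `|g s| <= k s) -> Int k -> Int (fun s => `|g s|).
Proof.
move=> sg gk ik; apply: (@Int_le _ k) => //.
  exact: (@simp_meas (fun s => `|g s|) (@simp_comp _ _ g (fun w => `|w|) sg)).
by move=> s; rewrite normr_id.
Qed.


Lemma leRI h1 h2 : Int h1 -> Int h2 -> (forall s, h1 s <= h2 s) ->
  Rintegral mu setT h1 <= Rintegral mu setT h2.
Proof. by move=> i1 i2 h12; apply: le_Rintegral => // s _; exact: h12. Qed.

Lemma arith1 (del m' iM eps : R) : 0 < del -> del <= 1/10 -> 10*del <= eps ->
  0 < iM -> iM * (1 + del) = 1 -> 1 - del < m' -> 1 - eps < (1 - del) * (iM * m').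
Proof.
move=> d0 d1 de i0 i1 hm.
have h1 : iM * (1 - del) < iM * m' by rewrite ltr_pM2l.
have h2 : iM <= 1 by nra.
have h3 : 1 - 2 * del <= iM * (1 - del) by nra.
have h4 : (1 - del) * (1 - 2 * del) < (1 - del) * (iM * m') by rewrite ltr_pM2l; lra.
nra.
Qed.

Lemma arith2 (del m' r eps : R) : 0 < del -> del <= 1/10 -> 10*del <= eps ->
  m' < 1 + del -> r < del -> 0 <= m' -> 2 * r + (2 + 3 * del) * m' < 2 + eps.
Proof.
move=> d0 d1 de hm hr m0.
have h1 : (2 + 3 * del) * m' <= (2 + 3 * del) * (1 + del) by rewrite ler_pM2l; lra.
nra.
Qed.

Lemma main (X : completeNormedModType R) :
  GL X -> @GL_space R (T -> X) (@L1_set R d T mu X) (@L1_norm R d T mu X).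
Proof.
move=> GLX x Lx Nx eps eps0.
pose del := Num.min eps 1 / 10.
have del0 : 0 < del by rewrite divr_gt0 // lt_min eps0 ltr01.
have del1 : del <= 1 / 10 by rewrite ler_pM2r ?invr_gt0 // ge_min lexx orbT.
have deleps : 10 * del <= eps.
  by rewrite /del mulrC divfK ?pnatr_eq0 // ge_min lexx.
have [s0 xs0] : exists s0, x s0 != 0.
  apply: contrapT => H.
  have x0 s : x s = 0 by apply/eqP; apply: contrapT => h; apply: H; exists s; exact/negP.
  move: Nx; rewrite /L1_norm.
  under eq_integral do rewrite x0 normr0.
  by rewrite integral0 /= => /eqP; rewrite eq_sym oner_eq0.
pose e0 := `|x s0|^-1 *: x s0.
have ne0 : `|e0| = 1.
  by rewrite normrZ normrV ?unitfE ?normr_eq0 // normr_id mulVf // normr_eq0.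
pose unitv (u : X) := if u == 0 then e0 else `|u|^-1 *: u.
have unit_norm u : `|unitv u| = 1.
  rewrite /unitv; case: eqP => // /eqP u0.
  by rewrite normrZ normrV ?unitfE ?normr_eq0 // normr_id mulVf // normr_eq0.
have unit_dec u : u = `|u| *: unitv u.
  rewrite /unitv; case: eqP => [->|/eqP u0]; first by rewrite normr0 scale0r.
  by rewrite scalerA divff ?normr_eq0 // scale1r.
have hPhi : forall u : X, exists phi, dual_sphere setT (@Num.norm R X) phi /\
    slice setT (@Num.norm R X) phi del (unitv u) /\
    forall z, setT z -> `|z| = 1 ->
      dist (@Num.norm R X) z (slice setT (@Num.norm R X) phi del) +
      dist (@Num.norm R X) z [set - a | a in slice setT (@Num.norm R X) phi del] < 2 + del.
  by move=> u; exact: (GLX (unitv u) I (unit_norm u) del del0).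
case: (choice hPhi) => Phi HPhi.
have Padd u w1 w2 : Phi u (w1 + w2) = Phi u w1 + Phi u w2.
  exact: (HPhi u).1.1.1.
have PZ u (a : R) w : Phi u (a *: w) = a * Phi u w.
  exact: (HPhi u).1.1.2.
have Pb u w : `|Phi u w| <= `|w|.
  exact: (HPhi u).1.2.1.
have PB u w1 w2 : Phi u (w1 - w2) = Phi u w1 - Phi u w2.
  by rewrite -scaleN1r Padd PZ mulN1r.
have PN u w : Phi u (- w) = - Phi u w.
  by rewrite -scaleN1r PZ mulN1r.
have Plip u w w' : `|Phi u w - Phi u w'| <= 1 * `|w - w'|.
  by rewrite mul1r -PB Pb.
have Pslice u : 1 - del < Phi u (unitv u) by case: (HPhi u).2.1 => _ [].
have Pself u : (1 - del) * `|u| <= Phi u u.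
  rewrite [X in Phi u X]unit_dec PZ mulrC ler_wpM2l //.
  exact: ltW.
have hVW : forall p : X * X, exists q : X * X,
    slice setT (@Num.norm R X) (Phi p.1) del q.1 /\ slice setT (@Num.norm R X) (Phi p.1) del q.2 /\
    `|unitv p.2 - q.1| + `|unitv p.2 + q.2| < 2 + del.
  move=> [u1 u2] /=.
  have Hd := (HPhi u1).2.2 (unitv u2) I (unit_norm u2).
  set S := slice setT (@Num.norm R X) (Phi u1) del in Hd *.
  set D1 := dist (@Num.norm R X) (unitv u2) S in Hd.
  set D2 := dist (@Num.norm R X) (unitv u2) [set - a | a in S] in Hd.
  pose eta := (2 + del - (D1 + D2)) / 2.
  have eta0 : 0 < eta by rewrite divr_gt0 // subr_gt0.
  have neS : S !=set0 by exists (unitv u1); exact: (HPhi u1).2.1.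
  have [a Sa Ha] := @dist_pick X (@Num.norm R X) S (unitv u2) eta (@normr_ge0 _ _) neS eta0.
  have neS' : [set - a | a in S] !=set0.
    by case: neS => a0 Sa0; exists (- a0), a0.
  have [b' [b Sb <-] Hb] := @dist_pick X (@Num.norm R X) _ (unitv u2) eta (@normr_ge0 _ _) neS' eta0.
  exists (a, b); split => //; split => //=.
  rewrite opprK in Hb.
  rewrite -/D1 -/D2 in Ha Hb.
  have : eta * 2 = 2 + del - (D1 + D2) by rewrite /eta divfK // pnatr_eq0.
  lra.
case: (choice hVW) => VW HVW.
have [t [st [Ixt Rxt]]] := @density X x del Lx del0.
have Ix := @L1_Int X x Lx.
have Rx : Rintegral mu setT (fun s => `|x s|) = 1 by [].
have It : Int (fun s => `|t s|).
  apply: (@simp_Int_norm X t (fun s => `|x s| + `|x s - t s|)) => //; last exact: IntD.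
  move=> s; have := ler_normB (x s) (x s - t s).
  by rewrite opprB addrCA subrr addr0.
pose m := Rintegral mu setT (fun s => `|t s|).
have m_ge : 1 - del < m.
  have : Rintegral mu setT (fun s => `|x s| - `|x s - t s|) <= m.
    apply: leRI => //; first exact: IntB.
    move=> s; have := ler_normD (t s) (x s - t s).
    rewrite addrCA subrr addr0; move=> h.
    have ar : forall a b c : R, a <= b + c -> a - c <= b by move=> *; lra.
    exact: ar h.
  rewrite RintegralB // Rx; lra.
have m0 : 0 < m by lra.
pose f (g : T -> X) := Rintegral mu setT (fun s => Phi (t s) (g s)).
have Iphi g : L1_set mu g -> Int (fun s => Phi (t s) (g s)).
  move=> Lg; apply: (@Int_le _ (fun s => `|g s|)); last exact: L1_Int.
    exact: (@sm_meas X X g t Phi 1 ler01 (proj1 Lg) st Plip).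
  by move=> s; exact: Pb.
have fbound g : L1_set mu g -> `|f g| <= L1_norm mu g.
  move=> Lg; apply: le_trans (le_normr_Rintegral measurableT (Iphi g Lg)) _.
  apply: leRI; [exact: IntA (Iphi g Lg)|exact: L1_Int|].
  by move=> s; exact: Pb.
exists f; split; [|split].
- split; [split|split] => //.
  + move=> g1 g2 L1 L2; rewrite /f -RintegralD //; try exact: Iphi.
    by apply: eq_Rintegral => s _ /=; rewrite Padd.
  + move=> a g Lg; rewrite /f -RintegralZl //; last exact: Iphi.
    by apply: eq_Rintegral => s _ /=; rewrite PZ.
  move=> e epos.
  have hW : forall u : X, exists w : X, `|w| <= 1 /\ 1 - e / 2 < Phi u w.
    move=> u; have e20 : 0 < e / 2 by rewrite divr_gt0.
    have [w [_ [w1 hw]]] := (HPhi u).1.2.2 _ e20.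
    have [pw|nw] := leP 0 (Phi u w).
      by exists w; split => //; rewrite -(ger0_norm pw).
    by exists (- w); split; rewrite ?normrN // PN -(ltr0_norm nw).
  case: (choice hW) => Wf HW.
  pose g s := (m^-1 * `|t s|) *: Wf (t s).
  have sg : simp g by exact: (@simp_comp _ _ t (fun u => (m^-1 * `|u|) *: Wf u) st).
  have gb s : `|g s| <= m^-1 * `|t s|.
    rewrite normrZ ger0_norm ?mulr_ge0 ?invr_ge0 ?(ltW m0) //.
    by rewrite ler_piMr ?mulr_ge0 ?invr_ge0 ?(ltW m0) //; case: (HW (t s)).
  have Itm : Int (fun s => m^-1 * `|t s|) by exact: IntZ.
  have Lg : L1_set mu g.
    apply: simp_L1 => //; exact: (@simp_Int_norm X g _ sg gb Itm).
  exists g; split => //; split.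
    apply: le_trans (_ : Rintegral mu setT (fun s => m^-1 * `|t s|) <= 1).
      apply: leRI => //; first exact: L1_Int.
    by rewrite RintegralZl // -/m mulVf // gt_eqF.
  have : Rintegral mu setT (fun s => (1 - e / 2) * (m^-1 * `|t s|)) <= f g.
    apply: leRI; [exact: IntZ|exact: Iphi|].
    move=> s; rewrite /g PZ mulrC ler_wpM2l ?mulr_ge0 ?invr_ge0 ?(ltW m0) //.
    by case: (HW (t s)) => _ /ltW.
  rewrite RintegralZl // RintegralZl // -/m mulVf ?gt_eqF // mulr1 => h.
  apply: lt_le_trans (ler_norm _).
  have e20 : 0 < e / 2 by rewrite divr_gt0.
  have : e / 2 + e / 2 = e by rewrite -splitr.
  lra.
- split => //; split; first by rewrite Nx.
  have : Rintegral mu setT (fun s => (1 - del) * `|x s| - 2 * `|x s - t s|) <= f x.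
    apply: leRI; [by apply: IntB; exact: IntZ|exact: Iphi|].
    move=> s.
    have h1 := Pself (t s).
    have h2 : Phi (t s) (x s) = Phi (t s) (t s) + Phi (t s) (x s - t s).
      by rewrite -Padd addrCA subrr addr0.
    have h3 := Pb (t s) (x s - t s).
    have h3' := ler_norm (- Phi (t s) (x s - t s)); rewrite normrN in h3'.
    have h4 := ler_normD (t s) (x s - t s); rewrite addrCA subrr addr0 in h4.
    have d1 : 0 <= 1 - del by lra.
    have h6 := ler_wpM2l d1 h4; rewrite mulrDr in h6.
    have h7 : (1 - del) * `|x s - t s| <= `|x s - t s|.
      by rewrite ler_piMl // lerBlDr lerDl ltW.
    rewrite h2; lra.
  rewrite RintegralB ?RintegralZl //; try exact: IntZ.
  rewrite Rx mulr1 => h.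
  lra.
- move=> z Lz Nz.
  have [t' [st' [Izt Rzt]]] := @density X z del Lz del0.
  have Iz := @L1_Int X z Lz.
  have Rz : Rintegral mu setT (fun s => `|z s|) = 1 by [].
  have It' : Int (fun s => `|t' s|).
    apply: (@simp_Int_norm X t' (fun s => `|z s| + `|z s - t' s|)) => //; last exact: IntD.
    move=> s; have := ler_normB (z s) (z s - t' s).
    by rewrite opprB addrCA subrr addr0.
  pose m' := Rintegral mu setT (fun s => `|t' s|).
  have m'ge : 1 - del < m'.
    have : Rintegral mu setT (fun s => `|z s| - `|z s - t' s|) <= m'.
      apply: leRI => //; first exact: IntB.
      move=> s; have := ler_normD (t' s) (z s - t' s).
      rewrite addrCA subrr addr0; move=> h.
      have ar : forall a b c : R, a <= b + c -> a - c <= b by move=> *; lra.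
      exact: ar h.
    rewrite RintegralB // Rz; lra.
  have m'le : m' < 1 + del.
    have : m' <= Rintegral mu setT (fun s => `|z s| + `|z s - t' s|).
      apply: leRI => //; first exact: IntD.
      move=> s; have := ler_normB (z s) (z s - t' s).
      by rewrite opprB addrCA subrr addr0.
    rewrite RintegralD // Rz; lra.
  have m'0 : 0 <= m' by lra.
  pose iM := (1 + del)^-1.
  have iM0 : 0 < iM by rewrite invr_gt0; lra.
  have iM1 : iM * (1 + del) = 1 by rewrite mulVf // gt_eqF //; lra.
  have iMle : iM <= 1 by nra.
  have iMd : 1 - iM <= del by nra.
  pose c s := iM * `|t' s|.
  have c0 s : 0 <= c s by rewrite mulr_ge0 // ltW.
  have Ic : Int c by exact: IntZ.
  pose v s := (VW (t s, t' s)).1.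
  pose w s := (VW (t s, t' s)).2.
  have Hv s : `|v s| <= 1 /\ 1 - del < Phi (t s) (v s).
    by case: (HVW (t s, t' s)) => [[_ [? ?]] _].
  have Hw s : `|w s| <= 1 /\ 1 - del < Phi (t s) (w s).
    by case: (HVW (t s, t' s)) => _ [[_ [? ?]] _].
  have Hvw s : `|unitv (t' s) - v s| + `|unitv (t' s) + w s| < 2 + del.
    by case: (HVW (t s, t' s)) => _ [_ ?].
  pose g s := c s *: v s.
  pose h s := c s *: w s.
  have sg : simp g.
    exact: (@simp_comb _ _ _ t t' (fun u1 u2 => (iM * `|u2|) *: (VW (u1, u2)).1) st st').
  have sh : simp h.
    exact: (@simp_comb _ _ _ t t' (fun u1 u2 => (iM * `|u2|) *: (VW (u1, u2)).2) st st').
  have inS (k vv : T -> X) : (forall s, k s = c s *: vv s) -> simp k ->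
      (forall s, `|vv s| <= 1 /\ 1 - del < Phi (t s) (vv s)) ->
      slice (@L1_set R d T mu X) (@L1_norm R d T mu X) f eps k.
    move=> kE sk Hk.
    have kb s : `|k s| <= c s.
      by rewrite kE normrZ ger0_norm // ler_piMr //; case: (Hk s).
    have Lk : L1_set mu k.
      by apply: simp_L1 => //; exact: (@simp_Int_norm X k _ sk kb Ic).
    split => //; split.
      apply: le_trans (_ : Rintegral mu setT c <= 1).
        by apply: leRI => //; exact: L1_Int.
      rewrite RintegralZl // -/m'.
      have : iM * m' <= iM * (1 + del) by rewrite ler_pM2l //; lra.
      lra.
    have : Rintegral mu setT (fun s => (1 - del) * c s) <= f k.
      apply: leRI; [exact: IntZ|exact: Iphi|].
      move=> s; rewrite kE PZ mulrC ler_wpM2l //.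
      by case: (Hk s) => _ /ltW.
    rewrite RintegralZl // RintegralZl // -/m' => hk.
    apply: lt_le_trans hk.
    exact: arith1.
  have gS := inS g v (fun s => erefl) sg Hv.
  have hS := inS h w (fun s => erefl) sh Hw.
  have d1 := @dist_le _ (@L1_norm R d T mu X) _ z g (@L1_norm_ge0 X) gS.
  have d2 := @dist_le _ (@L1_norm R d T mu X)
    [set - a | a in slice (@L1_set R d T mu X) (@L1_norm R d T mu X) f eps] z (- h)
    (@L1_norm_ge0 X) (ex_intro2 _ _ h hS erefl).
  have E1 : L1_norm mu (z - g) = Rintegral mu setT (fun s => `|z s - g s|) by [].
  have E2 : L1_norm mu (z - - h) = Rintegral mu setT (fun s => `|z s + h s|).
    by rewrite /L1_norm /Rintegral; congr fine; apply: eq_integral => s _ /=; rewrite opprK.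
  have Lg := proj1 gS; have Lh := proj1 hS.
  have Izg : Int (fun s => `|z s - g s|).
    apply: (@Int_le _ (fun s => `|z s| + c s)); last exact: IntD.
      apply: (@sm_meas X X z g (fun u w => `|w - u|) 1 ler01 (proj1 Lz) sg).
      move=> u w1 w2; rewrite mul1r; apply: le_trans (ler_dist_dist _ _) _.
      by rewrite opprB addrA subrK.
    move=> s; rewrite normr_id; apply: le_trans (ler_normB _ _) _.
    by rewrite lerD2l /g normrZ ger0_norm // ler_piMr //; case: (Hv s).
  have Izh : Int (fun s => `|z s + h s|).
    apply: (@Int_le _ (fun s => `|z s| + c s)); last exact: IntD.
      apply: (@sm_meas X X z h (fun u w => `|w + u|) 1 ler01 (proj1 Lz) sh).
      move=> u w1 w2; rewrite mul1r; apply: le_trans (ler_dist_dist _ _) _.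
      by rewrite opprD addrACA subrr addr0.
    move=> s; rewrite normr_id; apply: le_trans (ler_normD _ _) _.
    by rewrite lerD2l /h normrZ ger0_norm // ler_piMr //; case: (Hw s).
  have key : Rintegral mu setT (fun s => `|z s - g s|) +
             Rintegral mu setT (fun s => `|z s + h s|) <=
             2 * Rintegral mu setT (fun s => `|z s - t' s|) + (2 + 3 * del) * m'.
    rewrite -RintegralD // -RintegralZl // -RintegralZl // -RintegralD //; try exact: IntZ.
    apply: leRI; [exact: IntD|by apply: IntD; exact: IntZ|].
    move=> s.
    have ht := unit_dec (t' s).
    have cE : c s = iM * `|t' s| by [].
    move: (Hv s) (Hw s) (Hvw s) cE ht; rewrite /g /h.
    move: (c s) (v s) (w s) (unitv (t' s)) => cc vv ww u2.
    set a := `|t' s|; move=> [hv _] [hw _] hvw cE ht.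
    have a0 : 0 <= a by exact: normr_ge0.
    have ac0 : 0 <= a - cc.
      by rewrite cE subr_ge0 ler_piMl.
    have e1 : `|t' s - cc *: vv| <= a * `|u2 - vv| + (a - cc) * `|vv|.
      rewrite ht; apply: le_trans (ler_distD (a *: vv) _ _) _.
      by rewrite -scalerBr -scalerBl !normrZ (ger0_norm a0) (ger0_norm ac0).
    have e2 : `|t' s - - (cc *: ww)| <= a * `|u2 + ww| + (a - cc) * `|ww|.
      rewrite ht; apply: le_trans (ler_distD (- (a *: ww)) _ _) _.
      rewrite opprK -scalerDr opprK [- (a *: ww) + _]addrC -scalerBl !normrZ (ger0_norm a0).
      by rewrite distrC (ger0_norm ac0) addrC.
    have f1 := ler_distD (t' s) (z s) (cc *: vv).
    have f2 := ler_distD (t' s) (z s) (- (cc *: ww)).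
    rewrite opprK in f2.
    have g1 : (a - cc) * `|vv| <= a - cc by rewrite ler_piMr.
    have g2 : (a - cc) * `|ww| <= a - cc by rewrite ler_piMr.
    have g3 : a * (`|u2 - vv| + `|u2 + ww|) <= a * (2 + del).
      by rewrite ler_wpM2l // ltW.
    have g4 : (1 - iM) * a <= del * a.
      by rewrite ler_wpM2r.
    rewrite cE in g1 g2 g4 ac0 e1 e2 f1 f2 *.
    rewrite opprK in e2; lra.
  apply: le_lt_trans (lerD d1 d2) _; rewrite E1 E2.
  apply: le_lt_trans key _; exact: arith2.
Qed.

End Helpers.

Theorem theorem5p1 (R : realType) (d : measure_display) (S : measurableType d)
  (mu : {measure set S -> \bar R}) (X : completeNormedModType R) :
  measure_is_complete mu -> sigma_finite setT mu ->
  GL X ->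
  @GL_space R (S -> X) (@L1_set R d S mu X) (@L1_norm R d S mu X).
Proof.
move=> cmu _ GLX.
exact: (@main R d S mu cmu X GLX).
Qed.
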